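(* In a public goods economy (as in the context), let $\mathbf{a}$ be an outcome, let $K$ be a path connected component of $\mathbf{D}_{\mathbf{a}}=\{\mathbf{a}'\in[0,1]^n:\mathbf{u}(\mathbf{a})\ge\mathbf{u}(\mathbf{a}')\}$, and let $\mathbf{x}\in K$ lie on the lower envelope of $K$, i.e. there is no $\mathbf{x}'\in K$ with $\mathbf{x}'\lneq\mathbf{x}$. Then for some (possibly empty) set of agents $C\subseteq N$ we have $\mathbf{u}_C(\mathbf{x})=\mathbf{u}_C(\mathbf{a})$ and $\mathbf{x}_{N\setminus C}=\mathbf{0}_{N\setminus C}$.
   Context: Agents $N=\{1,\dots,n\}$; outcomes are vectors in $[0,1]^n$. Vector orderings: $\mathbf{x}\ge\mathbf{y}$ coordinatewise; $\mathbf{x}>\mathbf{y}$ strict in every coordinate; $\mathbf{x}\gneq\mathbf{y}$ means $\mathbf{x}\ge\mathbf{y}$ and $x_j>y_j$ for some $j$ ($\mathbf{x}\lneq\mathbf{y}$ means $\mathbf{y}\gneq\mathbf{x}$). For $C\subseteq N$, $\mathbf{v}_C$ is the restriction of $\mathbf{v}$ to coordinates in $C$. The utility function $\mathbf{u}:[0,1]^n\to[0,1]^n$ is continuous, concave, and has positive externalities: whenever $\mathbf{a}\gneq\mathbf{a}'$ and $a_i=a'_i$, then $u_i(\mathbf{a})>u_i(\mathbf{a}')$. *)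

(* Defs.v *)
(* Outcomes are row vectors 'rV[R]_n
   (a normed module, so its topology is the usual one on R^n). *)
From HB Require Import structures.
From mathcomp Require Import all_boot all_order all_algebra.
From mathcomp Require Import all_classical all_reals all_analysis.
Set Implicit Arguments. Unset Strict Implicit. Unset Printing Implicit Defensive.
Import Order.TTheory GRing.Theory Num.Theory.
Import numFieldNormedType.Exports.
Local Open Scope classical_set_scope.
Local Open Scope ring_scope.

Section Defs.
Variables (R : realType) (n : nat).
Notation V := 'rV[R]_n.

Definition cmp (x : V) (i : 'I_n) : R := x ord0 i.

Definition cube : set V := [set x | forall i, 0 <= cmp x i <= 1].

Definition vle (x y : V) : Prop := forall i, cmp x i <= cmp y i.
Definition vgneq (x y : V) : Prop := vle y x /\ exists j, cmp y j < cmp x j.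

Definition concave_on_cube (u : V -> V) : Prop :=
  forall x y (t : R), cube x -> cube y -> 0 <= t <= 1 ->
    forall i, t * cmp (u x) i + (1 - t) * cmp (u y) i
              <= cmp (u (t *: x + (1 - t) *: y)) i.

Definition pos_externalities (u : V -> V) : Prop :=
  forall a a' i, cube a -> cube a' -> vgneq a a' -> cmp a i = cmp a' i ->
    cmp (u a') i < cmp (u a) i.

Definition utility (u : V -> V) : Prop :=
  [/\ (forall x, cube x -> cube (u x)),
      {within cube, continuous u},
      concave_on_cube u & pos_externalities u].

Definition Dset (u : V -> V) (a : V) : set V :=
  [set a' | cube a' /\ vle (u a') (u a)].

Definition path_in (A : set V) (x y : V) : Prop :=
  exists f : R -> V, [/\ {within `[0, 1], continuous f},
    (forall t, 0 <= t <= 1 -> A (f t)), f 0 = x & f 1 = y].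

Definition path_component_of (A K : set V) : Prop :=
  exists2 y, A y & K = [set z | path_in A y z].

End Defs.

(* Main.v *)
Require Import Defs.
From HB Require Import structures.
From mathcomp Require Import all_boot all_order all_algebra.
From mathcomp Require Import all_classical all_reals all_analysis.
From mathcomp Require Import lra.
Import Order.TTheory GRing.Theory Num.Theory.
Import numFieldNormedType.Exports.
Local Open Scope classical_set_scope.
Local Open Scope ring_scope.

Lemma cmp_le_norm (R : realType) n (v : 'rV[R]_n) i : `|cmp v i| <= `|v|.
Proof.
rewrite /cmp. change (`|v|) with (mx_norm v). rewrite mx_normrE.
exact: (le_bigmax _ _ (ord0, i)).
Qed.

Lemma cmp_sub (R : realType) n (x : 'rV[R]_n) s c i j :
  cmp (x + s *: - (c *: delta_mx 0 i)) j = cmp x j - s * c * (j == i)%:R.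
Proof. by rewrite /cmp !mxE /= mulrN mulrA. Qed.

Lemma h1_cont (R : realType) : continuous (fun t : R => Num.min (2 * t) 1).
Proof.
move=> t; apply: (@continuous_min _ _ (fun t : R => 2 * t) (fun=> 1)).
  by apply: cvgM; [exact: cvg_cst| exact: cvg_id].
exact: cvg_cst.
Qed.

Lemma comp_within (R : realType) n (f : R -> 'rV[R]_n) (h : R -> R) :
  {within `[0, 1], continuous f} -> continuous h ->
  (forall t, 0 <= t <= 1 -> 0 <= h t <= 1) ->
  {within `[0, 1], continuous (f \o h)}.
Proof.
move=> /subspace_continuousP hf hc hI; apply/subspace_continuousP => t It.
have Iht : `[0, 1]%classic (h t).
  by move: It; rewrite /= !in_itv /= => /hI.
apply: cvg_trans (hf _ Iht).
move=> P HP; have H := hc t _ HP.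
have H' : nbhs t (fun s => `[0, 1]%classic (h s) -> P (f (h s))) := H.
change (nbhs t (fun s => `[0, 1]%classic s -> P (f (h s)))).
apply: filterS H' => s Hs Is; apply: Hs.
by move: Is; rewrite /= !in_itv /= => /hI.
Qed.

Theorem claim6 (R : realType) (n : nat) (u : 'rV[R]_n -> 'rV[R]_n)
  (hu : utility u) (a : 'rV[R]_n) (ha : cube a) (K : set 'rV[R]_n)
  (hK : path_component_of (Dset u a) K) (x : 'rV[R]_n) (hx : K x)
  (hlow : ~ exists x', K x' /\ vgneq x x') :
  exists C : {set 'I_n},
    (forall i, i \in C -> cmp (u x) i = cmp (u a) i) /\
    (forall i, i \notin C -> cmp x i = 0).
Proof.
case: hu => hcube hcont hconc hpe.
case: hK => y Dy HK; subst K.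
have [Dxc Dxv] : Dset u a x.
  by case: hx => f [_ hf _ <-]; apply: hf; rewrite ler01 lexx.
exists (finset (fun i => cmp (u x) i == cmp (u a) i)); split.
  by move=> i; rewrite inE => /eqP.
move=> i; rewrite inE => hne.
have hlt : cmp (u x) i < cmp (u a) i by rewrite lt_neqAle hne (Dxv i).
have [x0 x1] := andP (Dxc i).
apply/eqP; rewrite eq_le x0 andbT leNgt; apply/negP => xpos.
exfalso; apply: hlow.
pose gap := cmp (u a) i - cmp (u x) i.
have gap0 : 0 < gap by rewrite subr_gt0.
have hcx : u @ within (@cube R n) (nbhs x) --> u x.
  by move/subspace_continuousP: hcont; apply.
move: hcx => /cvgr_dist_lt /(_ gap gap0).
move=> /nbhs_normP [d d0 Hd].
pose e := delta_mx 0 i : 'rV[R]_n.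
pose c := Num.min (cmp x i) (d / (`|e| + 1)).
have e1 : 0 < `|e| + 1 by apply: ltr_wpDl (normr_ge0 _) ltr01.
have c0 : 0 < c by rewrite lt_min xpos divr_gt0.
have cx : c <= cmp x i by rewrite ge_min lexx.
have cd : c * (`|e| + 1) <= d.
  by rewrite -ler_pdivlMr // ge_min lexx orbT.
pose w := - (c *: e).
have key : forall s, 0 <= s <= 1 -> Dset u a (x + s *: w).
  move=> s /andP [s0 s1].
  have [s_eq0|s_neq0] := eqVneq s 0; first by rewrite s_eq0 scale0r addr0.
  have spos : 0 < s by rewrite lt_neqAle eq_sym s_neq0 s0.
  have sc : s * c <= c by rewrite ler_piMl // ltW.
  have cz : cube (x + s *: w).
    move=> j; rewrite /w cmp_sub.
    have [->|hji] := eqVneq j i.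
      have sc0 : 0 <= s * c by rewrite mulr_ge0 // ltW.
      by rewrite (_ : true%:R = 1 :> R) // mulr1; apply/andP; split; lra.
    by rewrite (_ : false%:R = 0 :> R) // mulr0 subr0; exact: Dxc.
  split => // j.
  have [->|hji] := eqVneq j i.
    have hb : `|x - (x + s *: w)| < d.
      rewrite opprD addrA subrr add0r normrN normrZ /w normrN normrZ.
      rewrite (ger0_norm s0) (gtr0_norm c0).
      have : s * (c * `|e|) <= c * `|e| by rewrite ler_piMl // mulr_ge0 ?normr_ge0 // ltW.
      lra.
    have := Hd _ hb cz.
    have := @cmp_le_norm R n (u x - u (x + s *: w)) i.
    rewrite {1}/cmp !mxE -/(cmp (u x) i) -/(cmp (u (x + s *: w)) i) => hle hn.
    have := le_lt_trans hle hn; rewrite ltr_norml => /andP [h1 h2].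
    rewrite /gap in h1 h2. lra.
  have hv : vgneq x (x + s *: w).
    split.
      move=> k; rewrite /w cmp_sub.
      have : 0 <= s * c * (k == i)%:R by rewrite !mulr_ge0 // ltW.
      lra.
    exists i; rewrite /w cmp_sub eqxx mulr1.
    have : 0 < s * c by rewrite mulr_gt0.
    lra.
  have := hpe x (x + s *: w) j Dxc cz hv.
  rewrite /w cmp_sub (negbTE hji) mulr0 subr0 => /(_ erefl) h.
  exact: le_trans (ltW h) (Dxv j).
have hI : forall t : R, 0 <= t <= 1 -> 0 <= Num.min (2 * t) 1 <= 1.
  move=> t /andP [t0 t1]; have [h|h] := leP (2 * t) 1.
    by apply/andP; split; lra.
  by apply/andP; split; lra.
exists (x + 1 *: w); split.
  case: hx => f [fc fD f0 f1].
  exists (fun t => f (Num.min (2 * t) 1) + (2 * t - Num.min (2 * t) 1) *: w).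
  split.
  - apply: (@within_continuousD _ _ _ _ (f \o (fun t => Num.min (2 * t) 1))
        (fun t => (2 * t - Num.min (2 * t) 1) *: w)).
      exact: (@comp_within R n f _ fc (@h1_cont R) hI).
    apply: continuous_subspaceT => t.
    apply: cvgZ; last exact: cvg_cst.
    apply: cvgB; last exact: h1_cont.
    by apply: cvgM; [exact: cvg_cst| exact: cvg_id].
  - move=> t /andP [t0 t1]; have [h|h] := leP (2 * t) 1.
      rewrite subrr scale0r addr0; apply: fD; apply/andP; split; lra.
    rewrite f1; apply: key; apply/andP; split; lra.
  - by rewrite mulr0 min_l ?ler01 // subrr scale0r addr0 f0.
  - have h21 : (1 : R) <= 2 by lra.
    have h211 : (2 - 1 : R) = 1 by lra.
    by rewrite mulr1 min_r // h211 f1.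
split.
  move=> k; rewrite /w cmp_sub.
  have : 0 <= 1 * c * (k == i)%:R by rewrite !mulr_ge0 // ltW.
  lra.
exists i; rewrite /w cmp_sub eqxx mulr1 mul1r; lra.
Qed.
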